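(* Fix $1<p<\infty$. Fix natural numbers $l_1,\dots,l_{d+1}$, let $L=\prod_{i=1}^{d+1}l_i$ and let $T=\bigcup_{i=0}^{d+1}\Lambda_i$ be an $(l_1,\dots,l_{d+1})$ interval tree. Suppose $0<\Delta,\nu<1$, $\lambda>0$, $\Theta>0$, $M>1$, and $(r_I)_{I\in T},(s_I)_{I\in T}\subset[0,\infty)$ are such that (i) for each $I\in T$, $r_I\le\lambda s_I$; (ii) for each $I\in T\setminus\Lambda_{d+1}$, $r_I\le\sum_{J^-=I}r_J$ and $s_I\le\sum_{J^-=I}s_J$; (iii) for all $0\le j\le d$, $\max_{I\in\Lambda_j}s_I\le M\min_{I\in\Lambda_j}s_I$; (iv) $\Delta M^p\le\nu\Theta^p/(2\lambda^p)$; (v) $r_{[L]}^p>(1-\nu/2)\Theta^p\bigl(\prod_{i=1}^{d+1}l_i^{p-1}\bigr)\sum_{I\in\Lambda_{d+1}}s_I^p$. Then for any $0\le j<d$, $\bigl|\{I\in\Lambda_j: r_I^p\le(1-\nu)l_{j+1}^{p-1}\Theta^p\sum_{J^-=I}s_J^p\}\bigr|<(1-\Delta)|\Lambda_j|$.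
   Context: $[n]=\{1,\dots,n\}$. Given natural numbers $l_1,\dots,l_{k}$ with $L=\prod_{j=1}^{k}l_j$, an $(l_1,\dots,l_k)$ interval tree $T=\bigcup_{i=0}^k\Lambda_i$ is built as follows: $\Lambda_0=\{[L]\}$; if $\Lambda_i$ ($i<k$) consists of pairwise disjoint integer subintervals of $[L]$ each of cardinality $\prod_{j=i+1}^k l_j$, then each $I\in\Lambda_i$ is partitioned into $l_{i+1}$ integer subintervals of equal cardinality, and $\Lambda_{i+1}$ is the set of all these subintervals over all $I\in\Lambda_i$. For $0<j\le k$ and $J\in\Lambda_j$, $J^-$ denotes the unique $I\in\Lambda_{j-1}$ with $J\subset I$; sums $\sum_{J^-=I}$ range over the children of $I$. *)

(* Defs.v *)
From HB Require Import structures.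
From mathcomp Require Import all_boot all_order all_algebra.
From mathcomp Require Import all_classical all_reals all_analysis.
Set Implicit Arguments. Unset Strict Implicit. Unset Printing Implicit Defensive.
Import Order.TTheory GRing.Theory Num.Theory.

(* An integer interval {a, a+1, ..., b} (a <= b) is represented by the pair (a, b). *)
Definition nat_interval := (nat * nat)%type.

Definition split_interval (I : nat_interval) (m : nat) : seq nat_interval :=
  let c := (I.2 - I.1).+1 %/ m in
  [seq (I.1 + t * c, I.1 + t.+1 * c - 1) | t <- iota 0 m].

Definition Ltot (l : nat -> nat) (k : nat) : nat := \prod_(1 <= i < k.+1) l i.

Fixpoint Lambda (l : nat -> nat) (k : nat) (j : nat) : seq nat_interval :=
  match j with
  | 0 => [:: (1, Ltot l k)]
  | j'.+1 => flatten [seq split_interval K (l j) | K <- Lambda l k j']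
  end.

Definition subint (J I : nat_interval) : bool := (I.1 <= J.1) && (J.2 <= I.2).

(* children of the node I in Lambda_j: the J in Lambda_{j+1} with J^- = I,
   i.e. J \subset I. *)
Definition children (l : nat -> nat) (k : nat) (j : nat) (I : nat_interval) : seq nat_interval :=
  [seq J <- Lambda l k j.+1 | subint J I].

(* Main.v *)
Require Import Defs.
From HB Require Import structures.
From mathcomp Require Import all_boot all_order all_algebra.
From mathcomp Require Import all_classical all_reals all_analysis.
From mathcomp Require Import zify ring lra.
Import Order.TTheory GRing.Theory Num.Theory.


Local Open Scope nat_scope.
Definition NN (l : nat -> nat) j := \prod_(1 <= i < j.+1) l i.
Definition CC (l : nat -> nat) k j := \prod_(j.+1 <= i < k.+1) l i.

Lemma flatten_iota m n :
  flatten [seq iota (t * m) m | t <- iota 0 n] = iota 0 (n * m).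
Proof.
elim: n => [|n IH]; first by [].
have -> : iota 0 n.+1 = iota 0 n ++ [:: n] by rewrite -addn1 iotaD.
rewrite map_cat flatten_cat IH /= cats0.
by rewrite mulSnr iotaD add0n.
Qed.

Lemma split_form t m c : (0 < m)%N -> (0 < c)%N ->
  split_interval (1 + t * (m * c), t.+1 * (m * c)) m =
  [seq (1 + x * c, x.+1 * c) | x <- iota (t * m) m].
Proof.
move=> m0 c0; rewrite /split_interval /=.
have -> : ((t.+1 * (m * c) - (1 + t * (m * c))).+1 %/ m = c)%N.
  have -> : ((t.+1 * (m * c) - (1 + t * (m * c))).+1 = m * c)%N.
    rewrite mulSn; have : (0 < m * c)%N by rewrite muln_gt0 m0.
    lia.
  by rewrite mulKn.
rewrite -[(t * m)%N]addn0 iotaDl -map_comp; apply: eq_map => u /=.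
congr pair; nia.
Qed.

Lemma prod_gt0 (l : nat -> nat) a b : (forall i, (a <= i < b)%N -> (0 < l i)%N) ->
  (0 < \prod_(a <= i < b) l i)%N.
Proof.
move=> H; rewrite big_seq_cond; apply: prodn_cond_gt0 => i /andP[] + _.
by rewrite mem_iota => Hi; apply: H; lia.
Qed.

Lemma filter_iota_int a m n : (a + m <= n)%N ->
  seq.filter (fun x => (a <= x < a + m)%N) (iota 0 n) = iota a m.
Proof.
move=> H.
have -> : iota 0 n = iota 0 a ++ iota a m ++ iota (a + m) (n - (a + m)).
  rewrite -iotaD -iotaD; congr iota; lia.
rewrite !filter_cat.
rewrite (eq_in_filter (a2 := fun _ => false)); last by move=> x; rewrite mem_iota; lia.
rewrite filter_pred0.
rewrite (eq_in_filter (a2 := fun _ => true)); last by move=> x; rewrite mem_iota; lia.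
rewrite filter_predT.
rewrite (eq_in_filter (a2 := fun _ => false)); last by move=> x; rewrite mem_iota; lia.
by rewrite filter_pred0 cats0.
Qed.

Section Tree.
Variable (l : nat -> nat) (k : nat).
Hypothesis lpos : forall i, (1 <= i <= k)%N -> (0 < l i)%N.

Lemma CC_gt0 j : (0 < CC l k j)%N.
Proof. apply: prod_gt0 => i Hi; apply: lpos; lia. Qed.

Lemma CCS j : (j < k)%N -> CC l k j = (l j.+1 * CC l k j.+1)%N.
Proof. by move=> jk; rewrite /CC big_ltn. Qed.

Lemma NNS j : NN l j.+1 = (NN l j * l j.+1)%N.
Proof. by rewrite /NN big_nat_recr. Qed.

Lemma NNC : (NN l k * CC l k k)%N = Ltot l k.
Proof. by rewrite /CC big_geq ?muln1. Qed.

Lemma LambdaE j : (j <= k)%N ->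
  Lambda l k j = [seq (1 + t * CC l k j, t.+1 * CC l k j) | t <- iota 0 (NN l j)].
Proof.
elim: j => [|j IH] jk.
  rewrite /= /NN big_geq // /CC /Ltot; congr [:: (_, _)].
  by rewrite mul1n.
rewrite /= IH; last lia.
rewrite -map_comp CCS //.
have m0 : (0 < l j.+1)%N by apply: lpos; lia.
have c0 := CC_gt0 j.+1.
rewrite (eq_map (g := fun t => [seq (1 + x * CC l k j.+1, x.+1 * CC l k j.+1) | x <- iota (t * l j.+1) (l j.+1)])); last first.
  by move=> t /=; rewrite split_form.
by rewrite NNS -flatten_iota map_flatten -map_comp.
Qed.

Lemma children_split j I : (j < k)%N -> I \in Lambda l k j ->
  children l k j I = split_interval I (l j.+1).
Proof.
move=> jk; rewrite LambdaE ?(ltnW jk) // => /mapP [t]; rewrite mem_iota add0n => /andP [_ tN] ->.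
have m0 : (0 < l j.+1)%N by apply: lpos; lia.
have c0 := CC_gt0 j.+1.
rewrite /children LambdaE // CCS // split_form // filter_map; congr map.
rewrite NNS.
rewrite (eq_in_filter (a2 := fun x => (t * l j.+1 <= x < t * l j.+1 + l j.+1)%N)); last first.
  move=> x _; rewrite /preim /subint /=.
  rewrite leq_add2l !mulnA !leq_pmul2r // mulSn addnC.
  by [].
apply: (filter_iota_int (t * l j.+1) (l j.+1)).
by rewrite -mulSnr leq_mul2r tN orbT.
Qed.

Lemma Lambda_flat j : (j < k)%N ->
  Lambda l k j.+1 = flatten [seq children l k j K | K <- Lambda l k j].
Proof.
move=> jk; have -> : Lambda l k j.+1 = flatten [seq split_interval K (l j.+1) | K <- Lambda l k j] by []. congr flatten; apply/eq_in_map => K HK.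
by rewrite children_split.

Qed.

Lemma size_children j I : (j < k)%N -> I \in Lambda l k j ->
  size (children l k j I) = l j.+1.
Proof. by move=> jk HI; rewrite children_split // size_map size_iota. Qed.

Lemma mem_children j I J : J \in children l k j I -> J \in Lambda l k j.+1.
Proof. by rewrite mem_filter => /andP[]. Qed.

Lemma size_Lambda j : (j <= k)%N -> (0 < size (Lambda l k j))%N.
Proof.
move=> jk; rewrite LambdaE // size_map size_iota; apply: prod_gt0 => i Hi.
apply: lpos; lia.
Qed.

End Tree.

Local Open Scope ring_scope.


Lemma cvx (R : realType) (p t a b : R) : 1 <= p -> 0 <= t -> t <= 1 -> 0 <= a -> 0 <= b ->
  (t * a + (1 - t) * b) `^ p <= t * a `^ p + (1 - t) * b `^ p.
Proof.
move=> p1 t0 t1 a0 b0.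
have := @convex_powR R p p1 (Itv01 t0 t1) a b.
rewrite !inE /= !in_itv /= !andbT => /(_ a0 b0).
by rewrite !convRE.
Qed.

Lemma pmean (R : realType) (p : R) (T : eqType) (s : seq T) (F : T -> R) :
  1 < p -> (forall x, x \in s -> 0 <= F x) ->
  (\sum_(x <- s) F x) `^ p <= (size s)%:R `^ (p - 1) * \sum_(x <- s) F x `^ p.
Proof.
move=> p1; have p0 : 0 < p by lra.
elim: s => [|x s IH] H.
  by rewrite !big_nil powR0 ?mul0r // gt_eqF.
have Hs : forall y, y \in s -> 0 <= F y by move=> y ys; apply: H; rewrite inE ys orbT.
have a0 : 0 <= F x by apply: H; rewrite inE eqxx.
have {}IH := IH Hs.
rewrite !big_cons /=.
case: (posnP (size s)) => [sz0|szp].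
  have E0 : s = [::] by apply/eqP; rewrite -size_eq0 sz0.
  rewrite E0 !big_nil /= !addr0 powR1 mul1r; lra.
set a := F x; set S := \sum_(y <- s) F y; set Tp := \sum_(y <- s) F y `^ p.
have S0 : 0 <= S by rewrite /S big_seq; apply: sumr_ge0 => y /Hs.
have T0 : 0 <= Tp by rewrite /Tp; apply: sumr_ge0 => y _; apply: powR_ge0.
set N := (size s)%:R : R.
have N0 : 0 < N by rewrite /N ltr0n.
have -> : (size s).+1%:R = N + 1 :> R by rewrite /N -natr1.
set t := (N + 1)^-1.
have t0 : 0 <= t by rewrite /t invr_ge0; lra.
have t1 : t <= 1 by rewrite /t invf_le1; lra.
have E : a + S = t * ((N + 1) * a) + (1 - t) * ((N + 1) / N * S).
  rewrite /t; field; lra.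
have x0 : 0 < (N + 1) / N by apply: divr_gt0; lra.
rewrite E; apply: le_trans; first (apply: cvx; [lra|done|done|apply: mulr_ge0; [lra|exact: a0]|apply: mulr_ge0; [exact: ltW|done]]).
rewrite !powRM //; try (by lra); try (by apply: ltW); try exact: a0. all: try (by rewrite invr_ge0; lra).
have e1 : t * ((N + 1) `^ p) = (N + 1) `^ (p - 1).
  rewrite -(mulr_powRB1 (x:=N+1)) ?mulrA ?/t ?mulVf; [by rewrite mul1r| |lra|lra].
  lra.
have e2 : (1 - t) * ((N + 1) `^ p * N^-1 `^ p) = (N + 1) `^ (p - 1) * N^-1 `^ (p - 1).
  rewrite -!powRM; [|lra|rewrite invr_ge0; lra|lra|rewrite invr_ge0; lra].
  rewrite -(mulr_powRB1 (x:=(N+1)/N)); [|lra|lra].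
  rewrite mulrA; have -> : (1 - t) * ((N + 1) / N) = 1 by rewrite /t; field; lra.
  by rewrite mul1r.
rewrite mulrA e1 (mulrA (1 - t)) e2 mulrDr.
apply: lerD => //.
rewrite -mulrA; apply: ler_wpM2l; first exact: powR_ge0.
apply: le_trans (ler_wpM2l (powR_ge0 _ _) IH) _.
have Ni : 0 <= N^-1 by rewrite invr_ge0; lra.
rewrite mulrA -powRM //.
by rewrite mulVf ?gt_eqF // powR1 mul1r.
Qed.

Lemma sum_split (R : realType) l k j (F : nat_interval -> R) : (forall i, (1 <= i <= k)%N -> (0 < l i)%N) ->
  (j < k)%N ->
  \sum_(J <- Lambda l k j.+1) F J = \sum_(I <- Lambda l k j) \sum_(J <- children l k j I) F J.
Proof. by move=> lp jk; rewrite Lambda_flat // big_flatten big_map. Qed.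

Lemma powle (R : realType) (p x y : R) : 0 <= p -> 0 <= x -> x <= y -> x `^ p <= y `^ p.
Proof.
move=> p0 x0 xy; apply: ge0_ler_powR => //; rewrite nnegrE //.
exact: le_trans xy.
Qed.

Lemma sum_const_cnt (R : realType) (T : Type) (s : seq T) (P : pred T) (c : R) :
  \sum_(i <- s | P i) c = c * (count P s)%:R.
Proof.
elim: s => [|x s IH]; first by rewrite big_nil mulr0.
rewrite big_cons /= IH; case: (P x) => /=; last by rewrite add0n.
by rewrite natrD mulrDr mulr1 addrC.
Qed.

Lemma chain (R : realType) (p : R) (l : nat -> nat) (k : nat) (f : nat -> nat_interval -> R) (a b : nat) :
  1 < p -> (forall i, (1 <= i <= k)%N -> (0 < l i)%N) ->
  (forall j I, (j <= k)%N -> I \in Lambda l k j -> 0 <= f j I) ->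
  (forall j I, (j < k)%N -> I \in Lambda l k j -> f j I <= \sum_(J <- children l k j I) f j.+1 J) ->
  (a <= b)%N -> (b <= k)%N ->
  \sum_(I <- Lambda l k a) f a I `^ p <=
    (\prod_(a.+1 <= i < b.+1) (l i)%:R `^ (p - 1)) * \sum_(I <- Lambda l k b) f b I `^ p.
Proof.
move=> p1 lp f0 fS ab; elim: b ab => [|b IH] ab bk.
  have -> : a = 0%N by lia.
  by rewrite big_geq // mul1r.
case: (ltngtP a b.+1) => [ab'|ba|->]; [|lia|by rewrite big_geq // mul1r].
have {}IH := IH ab' (ltnW bk).
apply: (le_trans IH).
rewrite [X in _ <= X * _](big_nat_recr b.+1) // -mulrA; apply: ler_wpM2l.
  by apply: prodr_ge0 => i _; apply: powR_ge0.
rewrite sum_split // mulr_sumr [X in X <= _]big_seq [X in _ <= X]big_seq; apply: ler_sum => I HI.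
apply: (le_trans (y := (\sum_(J <- children l k b I) f b.+1 J) `^ p)).
  apply: powle; [lra|exact: f0 (ltnW bk) HI|exact: fS].
rewrite -(@size_children l k lp b I bk HI).
apply: (pmean _ _ _ _ _ p1) => J /mem_children; apply: f0 => //.
Qed.

Lemma sum_const_size (R : realType) (T : Type) (s : seq T) (c : R) :
  \sum_(i <- s) c = c * (size s)%:R.
Proof.
elim: s => [|x s IH]; first by rewrite big_nil mulr0.
by rewrite big_cons IH /= mulrS mulrDr mulr1.
Qed.

Lemma ring1 (R : realType) (nu m T S : R) :
  (1 - nu) * m * T * S + nu / 2 * T * m * S = (1 - nu / 2) * T * m * S.
Proof. by field; rewrite ?pnatr_eq0. Qed.

Lemma ring2 (R : realType) (a b c m P Q S : R) :
  a * (b * c * m * (Q * S)) = b * c * (a * (m * Q)) * S.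
Proof. by ring. Qed.

Theorem lemma3p6 (R : realType) (p : R) (d : nat) (l : nat -> nat)
  (Delta nu lambda Theta M : R) (r s : nat -> nat_interval -> R) :
  1 < p ->
  (forall i, (1 <= i <= d.+1)%N -> (0 < l i)%N) ->
  0 < Delta < 1 -> 0 < nu < 1 -> 0 < lambda -> 0 < Theta -> 1 < M ->
  (forall j I, (j <= d.+1)%N -> I \in Lambda l d.+1 j -> 0 <= r j I /\ 0 <= s j I) ->
  (* (i) *)
  (forall j I, (j <= d.+1)%N -> I \in Lambda l d.+1 j -> r j I <= lambda * s j I) ->
  (* (ii) *)
  (forall j I, (j <= d)%N -> I \in Lambda l d.+1 j ->
     r j I <= \sum_(J <- children l d.+1 j I) r j.+1 J /\
     s j I <= \sum_(J <- children l d.+1 j I) s j.+1 J) ->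
  (* (iii) max_{Lambda_j} s <= M min_{Lambda_j} s *)
  (forall j I J, (j <= d)%N -> I \in Lambda l d.+1 j -> J \in Lambda l d.+1 j ->
     s j I <= M * s j J) ->
  (* (iv) *)
  Delta * M `^ p <= nu * Theta `^ p / (2 * lambda `^ p) ->
  (* (v) *)
  (1 - nu / 2) * Theta `^ p * (\prod_(1 <= i < d.+2) (l i)%:R `^ (p - 1)) *
     (\sum_(I <- Lambda l d.+1 d.+1) s d.+1 I `^ p)
   < r 0%N (1%N, Ltot l d.+1) `^ p ->
  forall j, (j < d)%N ->
    (size [seq I <- Lambda l d.+1 j |
             r j I `^ p <= (1 - nu) * (l j.+1)%:R `^ (p - 1) * Theta `^ p *
                            \sum_(J <- children l d.+1 j I) s j.+1 J `^ p])%:R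
    < (1 - Delta) * (size (Lambda l d.+1 j))%:R.
Proof.
move=> p1 lp /andP[D0 D1] /andP[nu0 nu1] lam0 Th0 M1 rs0 hi hii hiii hiv hv j jd.
have p0 : 0 < p by lra.
have r0 : forall j I, (j <= d.+1)%N -> I \in Lambda l d.+1 j -> 0 <= r j I.
  by move=> j' I a b; case: (rs0 j' I a b).
have s0 : forall j I, (j <= d.+1)%N -> I \in Lambda l d.+1 j -> 0 <= s j I.
  by move=> j' I a b; case: (rs0 j' I a b).
have rS : forall j I, (j < d.+1)%N -> I \in Lambda l d.+1 j ->
    r j I <= \sum_(J <- children l d.+1 j I) r j.+1 J.
  by move=> j' I a b; case: (hii j' I a b).
have sS : forall j I, (j < d.+1)%N -> I \in Lambda l d.+1 j ->
    s j I <= \sum_(J <- children l d.+1 j I) s j.+1 J.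
  by move=> j' I a b; case: (hii j' I a b).
rewrite ltNge; apply/negP => Hbad.
set m := (l j.+1)%:R `^ (p - 1) : R.
have m0 : 0 <= m by apply: powR_ge0.
set K := (1 - nu) * m * Theta `^ p.
have Thp : 0 < Theta `^ p by apply: powR_gt0.
have K0 : 0 <= K by rewrite /K; apply: mulr_ge0; [apply: mulr_ge0; lra|lra].
pose bad := fun I => r j I `^ p <= K * \sum_(J <- children l d.+1 j I) s j.+1 J `^ p.
have jd1 : (j <= d.+1)%N by apply: leqW; apply: ltnW.
have j1d1 : (j.+1 <= d.+1)%N by apply: leqW.
pose Lj := Lambda l d.+1 j.
pose n := size Lj.
have n0 : (0 < n)%N by apply: size_Lambda.
pose Sj := \sum_(I <- Lj) s j I `^ p.
pose Sj1 := \sum_(J <- Lambda l d.+1 j.+1) s j.+1 J `^ p.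
pose Sd := \sum_(I <- Lambda l d.+1 d.+1) s d.+1 I `^ p.
have Sj10 : 0 <= Sj1 by apply: sumr_ge0 => *; apply: powR_ge0.
have Sj0 : 0 <= Sj by apply: sumr_ge0 => *; apply: powR_ge0.
have Sd0 : 0 <= Sd by apply: sumr_ge0 => *; apply: powR_ge0.
have chs1 : Sj <= m * Sj1.
  have := @chain R p l d.+1 s j j.+1 p1 lp s0 sS (leqnSn j) j1d1.
  by rewrite big_nat1.
have chs2 := @chain R p l d.+1 s j.+1 d.+1 p1 lp s0 sS j1d1 (leqnn _).
have chr := @chain R p l d.+1 r 0 j p1 lp r0 rS (leq0n j) jd1.
have E0 : Lambda l d.+1 0 = [:: (1%N, Ltot l d.+1)] by [].
rewrite E0 big_seq1 in chr.
have Hgood : forall I, I \in Lj -> s j I `^ p * n%:R <= M `^ p * Sj.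
  move=> I HI.
  rewrite -sum_const_size /Sj mulr_sumr big_seq [X in _ <= X]big_seq.
  apply: ler_sum => J HJ.
  rewrite -powRM; [|lra|exact: s0 jd1 HJ].
  apply: powle; [lra|exact: s0 jd1 HI|exact: hiii (ltnW jd) HI HJ].
have Hb : (1 - Delta) * n%:R <= (count bad Lj)%:R by rewrite -size_filter.
have Hcnt : (count (predC bad) Lj)%:R <= Delta * n%:R.
  have := count_predC bad Lj => /(congr1 (fun x => x%:R : R)); rewrite natrD -/n.
  lra.
have nR0 : 0 < n%:R :> R by rewrite ltr0n.
have lamp : 0 < lambda `^ p by apply: powR_gt0.
have Mp : 0 <= M `^ p by apply: powR_ge0.
have B2 : \sum_(I <- Lj | ~~ bad I) r j I `^ p <= nu / 2 * Theta `^ p * m * Sj1.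
  pose X := lambda `^ p * (M `^ p * Sj / n%:R).
  have X0 : 0 <= X by rewrite /X; apply: mulr_ge0; [lra|apply: divr_ge0; [apply: mulr_ge0|lra]].
  apply: (le_trans (y := \sum_(I <- Lj | ~~ bad I) X)).
    rewrite [X in X <= _]big_seq_cond [X in _ <= X]big_seq_cond; apply: ler_sum => I /andP[HI _].
    apply: (le_trans (y := (lambda * s j I) `^ p)).
      apply: powle; [lra|exact: r0 jd1 HI|exact: hi jd1 HI].
    rewrite powRM; [|lra|exact: s0 jd1 HI].
    apply: ler_wpM2l; first lra.
    by rewrite ler_pdivlMr //; apply: Hgood.
  rewrite sum_const_cnt.
  apply: (le_trans (y := X * (Delta * n%:R))); first by apply: ler_wpM2l.
  have hv' : Delta * lambda `^ p * M `^ p <= nu * Theta `^ p / 2.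
    move: hiv; rewrite ler_pdivlMr; last by apply: mulr_gt0; lra.
    lra.
  rewrite /X.
  have -> : lambda `^ p * (M `^ p * Sj / n%:R) * (Delta * n%:R) = (Delta * lambda `^ p * M `^ p) * Sj.
    by field; lra.
  apply: (le_trans (y := (nu * Theta `^ p / 2) * Sj)); first by apply: ler_wpM2r.
  have -> : nu / 2 * Theta `^ p * m * Sj1 = (nu * Theta `^ p / 2) * (m * Sj1) by ring.
  apply: ler_wpM2l => //; apply: divr_ge0; [apply: mulr_ge0; lra|lra].
have B1 : \sum_(I <- Lj | bad I) r j I `^ p <= K * Sj1.
  apply: (le_trans (y := \sum_(I <- Lj | bad I) K * \sum_(J <- children l d.+1 j I) s j.+1 J `^ p)).
    by apply: ler_sum => I.
  rewrite /Sj1 (@sum_split R l d.+1 j (fun J => s j.+1 J `^ p) lp (ltnW jd)) mulr_sumr.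
  rewrite [X in _ <= X](bigID bad) /= lerDl.
  apply: sumr_ge0 => I _; apply: mulr_ge0 => //; apply: sumr_ge0 => *; apply: powR_ge0.
have Rj : \sum_(I <- Lj) r j I `^ p <= (1 - nu / 2) * Theta `^ p * m * Sj1.
  rewrite (bigID bad) /=; apply: le_trans (lerD B1 B2) _.
  rewrite le_eqVlt; apply/orP; left; apply/eqP; exact: ring1.
have P0 : 0 <= \prod_(1 <= i < j.+1) (l i)%:R `^ (p - 1) :> R.
  by apply: prodr_ge0 => *; apply: powR_ge0.
have P1 : 0 <= \prod_(j.+2 <= i < d.+2) (l i)%:R `^ (p - 1) :> R.
  by apply: prodr_ge0 => *; apply: powR_ge0.
move: hv; rewrite ltNge => /negP; apply.
apply: (le_trans chr).
rewrite (@big_cat_nat _ _ _ j.+1 1 d.+2) // (@big_ltn _ _ _ j.+1 d.+2) //= -/m.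
apply: (le_trans (ler_wpM2l P0 Rj)).
apply: (le_trans (y := \prod_(1 <= i < j.+1) (l i)%:R `^ (p - 1) * ((1 - nu / 2) * Theta `^ p * m * (\prod_(j.+2 <= i < d.+2) (l i)%:R `^ (p - 1) * Sd)))).
  apply: ler_wpM2l => //; apply: ler_wpM2l; last exact: chs2.
  apply: mulr_ge0 => //; apply: mulr_ge0; lra.
rewrite le_eqVlt; apply/orP; left; apply/eqP; exact: ring2.
Qed.
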